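(* Let $b \ge 2$ and $k \ge 1$ be integers. Let $m\ge 1$ be an integer with $\gcd(m,b)=1$, and let $r$ be an integer with $0\le r<m$. Then there exist infinitely many positive integers $n$ with $n\equiv r\pmod m$ that are $b^{\ell}$-Niven for all $\ell$ with $1\le \ell\le k$. Moreover, for every $s_0\ge 1$ there exists such an $n$ with \[ \mathsf{s}_b(n)=\mathsf{s}_{b^2}(n)=\cdots = \mathsf{s}_{b^k}(n)\ge s_0. \]
   Context: For an integer base $g\ge 2$ and a positive integer $c$ with base-$g$ expansion $c=\sum_{i=0}^{L} d_i g^i$, $d_i\in\{0,1,\dots,g-1\}$, $d_L\neq 0$, the base-$g$ digit sum is $\mathsf{s}_g(c)=\sum_{i=0}^L d_i$. A positive integer $c$ is called $g$-Niven if $\mathsf{s}_g(c)\mid c$. *)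

(* Defs.v *)
From mathcomp Require Import all_boot.

(* Base-g digit sum of c, computed by repeated Euclidean division.
   The fuel c suffices for g >= 2 since c %/ g < c for c > 0. *)
Fixpoint digit_sum_fuel (fuel g c : nat) : nat :=
  match fuel with
  | 0 => 0
  | fuel'.+1 => if c == 0 then 0 else c %% g + digit_sum_fuel fuel' g (c %/ g)
  end.

Definition digit_sum (g c : nat) : nat := digit_sum_fuel c g c.

Definition niven (g c : nat) : Prop := 0 < c /\ digit_sum g c %| c.

(* Main.v *)
Require Import Defs.
From mathcomp Require Import all_boot.
From mathcomp Require Import cyclic.

Lemma fuel_irr g : 2 <= g -> forall f1 f2 c, c <= f1 -> c <= f2 ->
  digit_sum_fuel f1 g c = digit_sum_fuel f2 g c.
Proof.
move=> g2; elim=> [|f1 IH] [|f2] [|c] h1 h2 //=.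
have lt : c.+1 %/ g < c.+1 by apply: ltn_Pdiv.
by rewrite (IH f2) //; rewrite -ltnS; apply: leq_trans lt _.
Qed.

Lemma ds_eq g c : 2 <= g ->
  digit_sum g c = if c == 0 then 0 else c %% g + digit_sum g (c %/ g).
Proof.
move=> g2; rewrite {1}/digit_sum; case: c => //= c.
congr (_ + _); apply: fuel_irr => //.
rewrite -ltnS; apply: ltn_Pdiv => //.
Qed.

Lemma ds_mul g c : 2 <= g -> digit_sum g (g * c) = digit_sum g c.
Proof.
move=> g2; rewrite ds_eq //; case: c => [|c]; first by rewrite muln0.
have g0 : 0 < g by apply: ltn_trans g2.
rewrite muln_eq0 eqn0Ngt g0 /= modnMr add0n mulKn //.
Qed.

Lemma ds_exp g e c : 2 <= g -> digit_sum g (g ^ e * c) = digit_sum g c.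
Proof.
move=> g2; elim: e => [|e IH]; first by rewrite expn0 mul1n.
by rewrite expnS -mulnA ds_mul.
Qed.

Lemma ds_1 g c : 2 <= g -> digit_sum g (1 + g * c) = (digit_sum g c).+1.
Proof.
move=> g2; rewrite ds_eq // add1n /= -add1n [1 + _]addnC mulnC modnMDl modn_small // divnMDl;
  last exact: ltn_trans g2.
by rewrite divn_small // addn0 add1n.
Qed.

Fixpoint rep (w s : nat) : nat := if s is s'.+1 then 1 + w * rep w s' else 0.

Lemma ds_rep g q s : 2 <= g -> 0 < q -> digit_sum g (rep (g ^ q) s) = s.
Proof.
move=> g2 q0; elim: s => [|s IH] /=; first by rewrite ds_eq.
by rewrite -{1}(prednK q0) expnS -mulnA ds_1 // ds_exp // IH.
Qed.

Lemma rep_mod w s M : w = 1 %[mod M] -> rep w s = s %[mod M].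
Proof.
move=> hw; elim: s => [|s IH] //=.
by rewrite -modnDmr -modnMml hw modnMml -modnMmr IH modnMmr mul1n modnDmr add1n.
Qed.

Lemma rep_gt0 w s : 0 < s -> 0 < rep w s.
Proof. by case: s. Qed.

Lemma exp_gt1 b e : 1 < b -> 0 < e -> 1 < b ^ e.
Proof.
move=> b1; have b0 : 0 < b by apply: ltn_trans b1.
case: e => // e _; rewrite expnS.
by apply: leq_trans b1 (leq_pmulr _ _); rewrite expn_gt0 b0.
Qed.

Lemma gen_lemma (b k m r : nat) :
  2 <= b -> 1 <= k -> 1 <= m -> coprime m b -> r < m ->
  forall N s0, exists n, N < n /\ 0 < n /\ n = r %[mod m] /\
     (forall l : nat, 1 <= l <= k -> niven (b ^ l) n) /\
     (forall l : nat, 1 <= l <= k -> digit_sum (b ^ l) n = digit_sum b n) /\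
     s0 <= digit_sum b n.
Proof.
move=> b2 k1 m1 cmb rm N s0.
have b0 : 0 < b by apply: ltn_trans b2.
set s := chinese m b r 1 %% (m * b) + m * b * s0.
have mb0 : 0 < m * b by rewrite muln_gt0 m1 b0.
have ss0 : s0 <= s.
  apply: leq_trans (leq_addl _ _); rewrite -{1}[s0]mul1n leq_mul2r mb0 orbT //.
have smod : s = r %[mod m].
  rewrite /s addnC -mulnA mulnC modnMDl (modn_dvdm _ (dvdn_mulr b (dvdnn m))).
  by rewrite chinese_modl.
have smodb : s %% b = 1.
  rewrite /s (mulnC m b) -mulnA (mulnC b (m * s0)) addnC modnMDl (modn_dvdm _ (dvdn_mulr m (dvdnn b))).
  by rewrite chinese_modr // modn_small.
have sb : coprime s b by rewrite -coprime_modl smodb coprime1n.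
set L := k`!.
set M := m * s.
have s0' : 0 < s.
  by case: (posnP s) smodb => // ->; rewrite mod0n.
have M0 : 0 < M by rewrite muln_gt0 m1 s0'.
set D := totient M.
have D0 : 0 < D by rewrite totient_gt0.
set w := b ^ (L * D).
have wM : w = 1 %[mod M].
  rewrite /w expnM Euler_exp_totient // coprimeMr !coprimeXl //.
  by rewrite coprime_sym.
  by rewrite coprime_sym.
set n := w ^ N * rep w s.
have key : forall l, 1 <= l <= k -> digit_sum (b ^ l) n = s.
  move=> l /andP [l1 lk].
  have dl : l %| L by apply: dvdn_fact; rewrite l1.
  have q0 : 0 < L %/ l * D.
    rewrite muln_gt0 D0 divn_gt0 ?andbT //; apply: dvdn_leq => //.
    exact: fact_gt0.
  have hw : w = (b ^ l) ^ (L %/ l * D).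
    by rewrite -expnM mulnA [l * _]mulnC divnK.
  rewrite /n hw -expnM ds_exp ?ds_rep //.
  by apply: exp_gt1.
  by apply: exp_gt1.
have key1 : digit_sum b n = s by rewrite -(expn1 b) key // leqnn k1.
have nM : n = s %[mod M].
  by rewrite /n -modnMml -modnXm wM modnXm exp1n modnMml mul1n rep_mod.
have n0 : 0 < n by rewrite muln_gt0 expn_gt0 /w expn_gt0 b0 rep_gt0.
exists n; split; last split; last split; last split; last split.
- apply: leq_trans (ltn_expl N (_ : 1 < w)) _.
    by apply: exp_gt1; rewrite // muln_gt0 D0 fact_gt0.
  by rewrite /n leq_pmulr // rep_gt0.
- exact: n0.
- by rewrite -(modn_dvdm n (dvdn_mulr s (dvdnn m))) nM (modn_dvdm s (dvdn_mulr s (dvdnn m))).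
- move=> l hl; split => //; rewrite key //.
  by apply/dvdnP; exists (n %/ s); apply/eqP; rewrite eq_sym -dvdn_eq /dvdn -(modn_dvdm n (dvdn_mull m (dvdnn s))) nM (modn_dvdm s (dvdn_mull m (dvdnn s))) modnn.
- by move=> l hl; rewrite key // key1.
- by rewrite key1.
Qed.

Theorem corollary7p1 (b k m r : nat) :
  2 <= b -> 1 <= k -> 1 <= m -> coprime m b -> r < m ->
  (forall N : nat, exists n : nat,
     N < n /\ 0 < n /\ n = r %[mod m] /\
     (forall l : nat, 1 <= l <= k -> niven (b ^ l) n)) /\
  (forall s0 : nat, 1 <= s0 -> exists n : nat,
     0 < n /\ n = r %[mod m] /\
     (forall l : nat, 1 <= l <= k -> niven (b ^ l) n) /\
     (forall l : nat, 1 <= l <= k -> digit_sum (b ^ l) n = digit_sum b n) /\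
     s0 <= digit_sum b n).
Proof.
move=> b2 k1 m1 cmb rm; split.
- move=> N; have [n [h1 [h2 [h3 [h4 _]]]]] := gen_lemma b k m r b2 k1 m1 cmb rm N 1.
  by exists n.
- move=> s0 _; have [n [_ h]] := gen_lemma b k m r b2 k1 m1 cmb rm 0 s0.
  by exists n.
Qed.
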